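(* Let $m,n\ge 6$ be integers. Then $$\max\{\gamma_2^d(C_{m-1}\Box C_n),\ \gamma_2^d(C_m\Box C_{n-1})\}\le \gamma_2^d(C_m\Box C_n).$$
   Context: $C_k$ denotes the cycle on $k$ vertices, and $G\Box H$ is the Cartesian product: vertex set $V(G)\times V(H)$, with $(g,h)\sim(g',h')$ iff either $g=g'$ and $hh'\in E(H)$, or $h=h'$ and $gg'\in E(G)$. For a simple graph $\Gamma$ and a vertex $v$, let $\Gamma(v)$ be the set of vertices at distance $1$ from $v$ and $\Gamma_2(v)$ the set of vertices at distance exactly $2$ from $v$. A set $S\subseteq V(\Gamma)$ is a disjunctive dominating set if every vertex $v\notin S$ satisfies $|\Gamma(v)\cap S|\ge 1$ or $|\Gamma_2(v)\cap S|\ge 2$. The disjunctive domination number $\gamma_2^d(\Gamma)$ is the minimum cardinality of a disjunctive dominating set of $\Gamma$. *)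

(* Defs.v *)
From mathcomp Require Import all_boot.
Set Implicit Arguments. Unset Strict Implicit. Unset Printing Implicit Defensive.

(* A simple graph: vertex finType T with symmetric irreflexive adjacency e. *)

Definition nbhd (T : finType) (e : rel T) (v : T) : {set T} :=
  [set u | (u != v) && e v u].

Definition nbhd2 (T : finType) (e : rel T) (v : T) : {set T} :=
  [set u | [&& u != v, ~~ e v u & [exists w, e v w && e w u]]].

Definition disj_dom (T : finType) (e : rel T) (S : {set T}) : bool :=
  [forall v, (v \notin S) ==>
     ((0 < #|nbhd e v :&: S|) || (2 <= #|nbhd2 e v :&: S|))].

(* Disjunctive domination number (setT is always disjunctive dominating). *)
Definition ddom_num (T : finType) (e : rel T) : nat :=
  #|[arg min_(S < [set: T] | disj_dom e S) #|S|]|.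

(* Cycle C_k on 'I_k (k >= 3): i ~ j iff j = i+1 mod k or i = j+1 mod k. *)
Definition cycle_adj (k : nat) : rel 'I_k :=
  fun i j => (j == (i.+1 %% k) :> nat) || (i == (j.+1 %% k) :> nat).

Definition cart_adj (A B : finType) (eA : rel A) (eB : rel B) : rel (A * B) :=
  fun x y => ((x.1 == y.1) && eB x.2 y.2) || ((x.2 == y.2) && eA x.1 y.1).

Arguments cycle_adj : clear implicits.
Definition torus_adj (m n : nat) : rel ('I_m * 'I_n) :=
  cart_adj (cycle_adj m) (cycle_adj n).

Arguments torus_adj : clear implicits.
Definition gamma2d_torus (m n : nat) : nat := ddom_num (torus_adj m n).

(* Main.v *)
Require Import Defs.
From mathcomp Require Import all_boot zify.
From Stdlib Require Import ZArith Lia.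
Set Implicit Arguments. Unset Strict Implicit. Unset Printing Implicit Defensive.

Lemma ddom_spec (T : finType) (e : rel T) :
  exists S, disj_dom e S /\ ddom_num e = #|S| /\ (forall S', disj_dom e S' -> #|S| <= #|S'|).
Proof.
rewrite /ddom_num.
have Ht : disj_dom e [set: T].
  by apply/forallP => v; rewrite in_setT.
case: arg_minnP => // S HS Hmin.
by exists S; split => //; split.
Qed.

Lemma ddom_le (T T' : finType) (e : rel T) (e' : rel T') (F : T -> T') :
  (forall y, exists x, F x = y) ->
  (forall x y, e x y -> F x = F y \/ e' (F x) (F y)) ->
  (forall v s1 s2, s1 != s2 -> s1 \in nbhd2 e v -> s2 \in nbhd2 e v -> F s1 = F s2 -> False) ->
  ddom_num e' <= ddom_num e.
Proof.
move=> Fsurj Fhom Fcol.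
have [S [HS [-> _]]] := ddom_spec e.
have [S' [_ [-> Hmin']]] := ddom_spec e'.
apply: leq_trans (leq_imset_card F S).
apply: Hmin'.
apply/forallP => v'; apply/implyP => Hv'.
have [v Hv] := Fsurj v'.
have HvS : v \notin S.
  by apply: contra Hv' => H; rewrite -Hv; apply: imset_f.
have := forallP HS v; rewrite HvS /= => /orP [H1|H2].
- move/card_gt0P: H1 => [s]; rewrite !inE => /andP [/andP [Hsv Hvs] HsS].
  have HFs : F s \in F @: S by apply: imset_f.
  have HFsv : F s != v' by apply: contraNneq Hv' => <-.
  apply/orP; left; apply/card_gt0P; exists (F s); rewrite !inE HFs HFsv andbT /=.
  case: (Fhom _ _ Hvs) => [E|]; last by rewrite Hv.
  by move: HFsv; rewrite -E Hv eqxx.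
- move/card_gt1P: H2 => [s1 [s2 [Hs1 Hs2 Hne]]].
  move: Hs1 Hs2; rewrite !inE => /andP [Hn1 HS1] /andP [Hn2 HS2].
  have HF1 : F s1 \in F @: S by apply: imset_f.
  have HF2 : F s2 \in F @: S by apply: imset_f.
  have HF1v : F s1 != v' by apply: contraNneq Hv' => <-.
  have HF2v : F s2 != v' by apply: contraNneq Hv' => <-.
  case E1: (e' v' (F s1)).
    by apply/orP; left; apply/card_gt0P; exists (F s1); rewrite !inE HF1 HF1v E1.
  case E2: (e' v' (F s2)).
    by apply/orP; left; apply/card_gt0P; exists (F s2); rewrite !inE HF2 HF2v E2.
  have in2 : forall s, s \in nbhd2 e v -> F s != v' -> e' v' (F s) = false -> F s \in nbhd2 e' v'.
    move=> s; rewrite !inE => /and3P [_ _ /existsP [w /andP [Hvw Hws]]] Hsv Hes.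
    rewrite Hsv Hes /=; apply/existsP; exists (F w).
    case: (Fhom _ _ Hvw) => [Ew|Ew]; case: (Fhom _ _ Hws) => [Ew'|Ew'].
    + by move: Hsv; rewrite -Ew' -Ew Hv eqxx.
    + by move: Hes; rewrite -Hv Ew Ew'.
    + by move: Hes; rewrite -Ew' -Hv Ew.
    + by rewrite -Hv Ew Ew'.
  apply/orP; right; apply/card_gt1P; exists (F s1), (F s2); split.
  + by rewrite in_setI HF1 andbT; apply: in2 => //; rewrite inE.
  + by rewrite in_setI HF2 andbT; apply: in2 => //; rewrite inE.
  + by apply/eqP => E; apply: (Fcol v s1 s2) => //; rewrite inE.
Qed.


Lemma modS x k : x < k -> (x.+1 %% k = x.+1 /\ x.+1 < k) \/ (x.+1 = k /\ x.+1 %% k = 0).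
Proof.
move=> H; case: (ltngtP x.+1 k) => H'.
- by left; rewrite modn_small.
- lia.
- by right; rewrite H' modnn.
Qed.

Lemma cycP k (i j : 'I_k) : cycle_adj k i j <->
  (j = i.+1 :> nat \/ (i.+1 = k /\ j = 0 :> nat) \/ i = j.+1 :> nat \/ (j.+1 = k /\ i = 0 :> nat)).
Proof.
rewrite /cycle_adj.
have Hi := ltn_ord i; have Hj := ltn_ord j.
case: (modS Hi) => [[-> ?]|[? ->]]; case: (modS Hj) => [[-> ?]|[? ->]];
  split => [/orP [/eqP|/eqP] | ]; try lia;
  move=> H; apply/orP; (try (left; apply/eqP; lia)); (right; apply/eqP; lia).
Qed.

Lemma torP m n (x y : 'I_m * 'I_n) : torus_adj m n x y <->
  ((x.1 = y.1 :> nat /\ cycle_adj n x.2 y.2) \/ (x.2 = y.2 :> nat /\ cycle_adj m x.1 y.1)).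
Proof.
rewrite /torus_adj /cart_adj; split.
- by case/orP => /andP [/eqP -> H]; [left|right].
- case => [[/val_inj -> H]|[/val_inj -> H]]; apply/orP; [left|right]; by rewrite eqxx H.
Qed.

Lemma cycZ k (i j : 'I_k) : cycle_adj k i j -> exists u d : Z,
  (Z.of_nat j - Z.of_nat i = u + Z.of_nat k * d)%Z /\ (u = 1 \/ u = -1)%Z /\ (-1 <= d <= 1)%Z.
Proof.
move/cycP => [H|[[H1 H2]|[H|[H1 H2]]]].
- exists 1%Z, 0%Z; lia.
- exists 1%Z, (-1)%Z; lia.
- exists (-1)%Z, 0%Z; lia.
- exists (-1)%Z, 1%Z; lia.
Qed.

Lemma torZ m n (x y : 'I_m * 'I_n) : torus_adj m n x y -> exists u1 d1 u2 d2 h : Z,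
  (Z.of_nat y.1 - Z.of_nat x.1 = u1 + Z.of_nat m * d1)%Z /\
  (Z.of_nat y.2 - Z.of_nat x.2 = u2 + Z.of_nat n * d2)%Z /\
  (-1 <= u1 <= 1)%Z /\ (-1 <= u2 <= 1)%Z /\ (-1 <= d1 <= 1)%Z /\ (-1 <= d2 <= 1)%Z /\
  (u1 + u2 = 2 * h + 1)%Z.
Proof.
move/torP => [[H1 /cycZ [u [d [H2 [[Hu|Hu] Hd]]]]]|[H1 /cycZ [u [d [H2 [[Hu|Hu] Hd]]]]]]; subst u.
- exists 0%Z, 0%Z, 1%Z, d, 0%Z; lia.
- exists 0%Z, 0%Z, (-1)%Z, d, (-1)%Z; lia.
- exists 1%Z, d, 0%Z, 0%Z, 0%Z; lia.
- exists (-1)%Z, d, 0%Z, 0%Z, (-1)%Z; lia.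
Qed.

Lemma mulZ0 (m : nat) (D U : Z) : 6 <= m -> (Z.of_nat m * D = U)%Z -> (-5 <= U <= 5)%Z -> D = 0%Z.
Proof. move=> Hm H HU; nia. Qed.

Lemma no5 m n (hm : 6 <= m) (hn : 6 <= n) (a b c d f : 'I_m * 'I_n) :
  torus_adj m n a b -> torus_adj m n b c -> torus_adj m n c d -> torus_adj m n d f ->
  torus_adj m n f a -> False.
Proof.
move=> /torZ [u1 [d1 [v1 [e1 [h1 [A1 [B1 [C1 [D1 [E1 [F1 G1]]]]]]]]]]].
move=> /torZ [u2 [d2 [v2 [e2 [h2 [A2 [B2 [C2 [D2 [E2 [F2 G2]]]]]]]]]]].
move=> /torZ [u3 [d3 [v3 [e3 [h3 [A3 [B3 [C3 [D3 [E3 [F3 G3]]]]]]]]]]].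
move=> /torZ [u4 [d4 [v4 [e4 [h4 [A4 [B4 [C4 [D4 [E4 [F4 G4]]]]]]]]]]].
move=> /torZ [u5 [d5 [v5 [e5 [h5 [A5 [B5 [C5 [D5 [E5 [F5 G5]]]]]]]]]]].
have X1 : (Z.of_nat m * (d1 + d2 + d3 + d4 + d5) = - (u1 + u2 + u3 + u4 + u5))%Z by lia.
have X2 : (Z.of_nat n * (e1 + e2 + e3 + e4 + e5) = - (v1 + v2 + v3 + v4 + v5))%Z by lia.
have Y1 := mulZ0 hm X1 ltac:(lia).
have Y2 := mulZ0 hn X2 ltac:(lia).
lia.
Qed.


Lemma cyc_sym k (i j : 'I_k) : cycle_adj k i j = cycle_adj k j i.
Proof. by rewrite /cycle_adj orbC. Qed.

Lemma tor_sym m n (x y : 'I_m * 'I_n) : torus_adj m n x y = torus_adj m n y x.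
Proof. rewrite /torus_adj /cart_adj (eq_sym x.1) (eq_sym x.2) (cyc_sym x.1) (cyc_sym x.2). reflexivity. Qed.
Lemma pairE (A B : finType) (x y : A * B) : x.1 = y.1 -> x.2 = y.2 -> x = y.
Proof. by case: x; case: y => /= ? ? ? ? -> ->. Qed.
Lemma ord_eq k (i j : 'I_k) : i = j :> nat -> i = j.
Proof. exact: val_inj. Qed.

Lemma collide m n (hm : 6 <= m) (hn : 6 <= n) (v s1 s2 : 'I_m * 'I_n) :
  torus_adj m n s1 s2 -> s1 \in nbhd2 (torus_adj m n) v -> s2 \in nbhd2 (torus_adj m n) v -> False.
Proof.
move=> H12; rewrite !inE => /and3P [_ _ /existsP [w1 /andP [A1 B1]]] /and3P [_ _ /existsP [w2 /andP [A2 B2]]].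
rewrite tor_sym in B2; rewrite tor_sym in A2.
exact: (no5 hm hn A1 B1 H12 B2 A2).
Qed.

Lemma step1 m n (hm : 6 <= m.+2) (hn : 6 <= n) :
  gamma2d_torus m.+1 n <= gamma2d_torus m.+2 n.
Proof.
pose F := fun x : 'I_m.+2 * 'I_n => ((inord (minn x.1 m) : 'I_m.+1), x.2).
have FK : forall x, (F x).1 = minn x.1 m :> nat.
  by move=> x; rewrite /F /= inordK // ltnS geq_minr.
apply: (@ddom_le _ _ _ _ F).
- move=> [a b]; exists (widen_ord (leqnSn _) a, b); apply: pairE => //.
  by apply: ord_eq; rewrite FK /=; have := ltn_ord a; lia.
- move=> x y /torP [[E1 E2]|[E1 /cycP E2]].
  + right; apply/torP; left; split => //; by rewrite !FK E1.
  + have := ltn_ord x.1; have := ltn_ord y.1 => ??.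
    have [E|E] : minn x.1 m = minn y.1 m \/
       ((F y).1 = (F x).1.+1 :> nat \/ ((F x).1.+1 = m.+1 /\ (F y).1 = 0 :> nat) \/
        (F x).1 = (F y).1.+1 :> nat \/ ((F y).1.+1 = m.+1 /\ (F x).1 = 0 :> nat)) by rewrite !FK; move: E2; clear; simpl; lia.
    * by left; rewrite /F /= E (ord_eq E1).
    * by right; apply/torP; right; split => //; apply/cycP.
- move=> v [a1 b1] [a2 b2] Hne H1 H2 E; apply: (collide hm hn _ H1 H2).
  have E1 := f_equal (fun z => val z.1) E; have E2 := f_equal snd E.
  rewrite /= in E1; rewrite (FK (a1,b1)) (FK (a2,b2)) /= in E1; rewrite /F /= in E2.
  apply/torP; right; split; first by rewrite /= E2.
  apply/cycP => /=.
  have : a1 <> a2 :> nat.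
    by move=> E3; move/eqP: Hne; apply; rewrite (ord_eq E3) E2.
  move=> Hn; move: Hn E1 (ltn_ord a1) (ltn_ord a2); clear; lia.
Qed.

Lemma step2 m n (hm : 6 <= m) (hn : 6 <= n.+2) :
  gamma2d_torus m n.+1 <= gamma2d_torus m n.+2.
Proof.
pose F := fun x : 'I_m * 'I_n.+2 => (x.1, (inord (minn x.2 n) : 'I_n.+1)).
have FK : forall x, (F x).2 = minn x.2 n :> nat.
  by move=> x; rewrite /F /= inordK // ltnS geq_minr.
apply: (@ddom_le _ _ _ _ F).
- move=> [a b]; exists (a, widen_ord (leqnSn _) b); apply: pairE => //.
  by apply: ord_eq; rewrite FK /=; have := ltn_ord b; lia.
- move=> x y /torP [[E1 /cycP E2]|[E1 E2]].
  + have [E|E] : minn x.2 n = minn y.2 n \/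
       ((F y).2 = (F x).2.+1 :> nat \/ ((F x).2.+1 = n.+1 /\ (F y).2 = 0 :> nat) \/
        (F x).2 = (F y).2.+1 :> nat \/ ((F y).2.+1 = n.+1 /\ (F x).2 = 0 :> nat)).
      by rewrite !FK; move: E2; clear; simpl; lia.
    * by left; rewrite /F /= E (ord_eq E1).
    * by right; apply/torP; left; split => //; apply/cycP.
  + right; apply/torP; right; split => //; by rewrite !FK E1.
- move=> v [a1 b1] [a2 b2] Hne H1 H2 E; apply: (collide hm hn _ H1 H2).
  have E1 := f_equal (fun z => val z.2) E; have E2 := f_equal fst E.
  rewrite /= in E1; rewrite (FK (a1,b1)) (FK (a2,b2)) /= in E1; rewrite /F /= in E2.
  apply/torP; left; split; first by rewrite /= E2.
  apply/cycP => /=.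
  have : b1 <> b2 :> nat.
    by move=> E3; move/eqP: Hne; apply; rewrite (ord_eq E3) E2.
  move=> Hn; move: Hn E1 (ltn_ord b1) (ltn_ord b2); clear; lia.
Qed.

Theorem lemma3 (m n : nat) (hm : 6 <= m) (hn : 6 <= n) :
  maxn (gamma2d_torus m.-1 n) (gamma2d_torus m n.-1) <= gamma2d_torus m n.
Proof.
rewrite geq_max; apply/andP; split.
- case: m hm => [|[|m]] hm //; exact: step1.
- case: n hn => [|[|n]] hn //; exact: step2.
Qed.
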